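(* Let $G$ be a finite, connected, undirected, unweighted graph without self-loops on $N=N_{\mathrm{G}}+N_{\mathrm{R}}$ vertices, properly two-colored with $N_{\mathrm{G}}$ green and $N_{\mathrm{R}}$ red vertices. Suppose every green vertex has degree $k_{\mathrm{G}}$ and every red vertex has degree $k_{\mathrm{R}}$. Let $a_{\mathrm{G}},a_{\mathrm{R}},b_{\mathrm{G}},b_{\mathrm{R}}>0$ with $a_{\mathrm{G}}a_{\mathrm{R}}\neq b_{\mathrm{G}}b_{\mathrm{R}}$. Define $$\zeta_{\mathrm{G}}=\frac{b_{\mathrm{R}}(a_{\mathrm{R}}k_{\mathrm{G}}+b_{\mathrm{G}}k_{\mathrm{R}})}{a_{\mathrm{R}}(a_{\mathrm{G}}k_{\mathrm{R}}+b_{\mathrm{R}}k_{\mathrm{G}})},\qquad \zeta_{\mathrm{R}}=\frac{b_{\mathrm{G}}(a_{\mathrm{G}}k_{\mathrm{R}}+b_{\mathrm{R}}k_{\mathrm{G}})}{a_{\mathrm{G}}(a_{\mathrm{R}}k_{\mathrm{G}}+b_{\mathrm{G}}k_{\mathrm{R}})}.$$ Then in the colored Moran process on $G$, the mean fixation probability of a single $A$ placed at a uniformly random vertex in a population otherwise of type $B$ is $$\rho_A=\frac{1-\frac{1}{N}\left(N_{\mathrm{G}}\zeta_{\mathrm{G}}+N_{\mathrm{R}}\zeta_{\mathrm{R}}\right)}{1-\zeta_{\mathrm{G}}^{N_{\mathrm{G}}}\zeta_{\mathrm{R}}^{N_{\mathrm{R}}}}.$$ Likewise, the mean fixation probability $\rho_B$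 of a single $B$ placed at a uniformly random vertex in a population otherwise of type $A$ is given by the same formula with the roles of $a$ and $b$ interchanged, i.e. $$\rho_B=\frac{1-\frac{1}{N}\left(N_{\mathrm{G}}\eta_{\mathrm{G}}+N_{\mathrm{R}}\eta_{\mathrm{R}}\right)}{1-\eta_{\mathrm{G}}^{N_{\mathrm{G}}}\eta_{\mathrm{R}}^{N_{\mathrm{R}}}},\quad \eta_{\mathrm{G}}=\frac{a_{\mathrm{R}}(b_{\mathrm{R}}k_{\mathrm{G}}+a_{\mathrm{G}}k_{\mathrm{R}})}{b_{\mathrm{R}}(b_{\mathrm{G}}k_{\mathrm{R}}+a_{\mathrm{R}}k_{\mathrm{G}})},\ \eta_{\mathrm{R}}=\frac{a_{\mathrm{G}}(b_{\mathrm{G}}k_{\mathrm{R}}+a_{\mathrm{R}}k_{\mathrm{G}})}{b_{\mathrm{G}}(b_{\mathrm{R}}k_{\mathrm{G}}+a_{\mathrm{G}}k_{\mathrm{R}})}.$$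
   Context: A proper two-coloring assigns each vertex one of two colors, green or red, so that no two adjacent vertices have the same color. Each vertex is occupied by one individual of type $A$ (mutant) or $B$ (resident). The fitness of an individual depends on its type and the color of its vertex: type $A$ has fitness $a_{\mathrm{G}}$ on green and $a_{\mathrm{R}}$ on red vertices; type $B$ has fitness $b_{\mathrm{G}}$ on green and $b_{\mathrm{R}}$ on red vertices. Colors are fixed over time. Colored Moran (birth-death) process: in each time step, one individual is chosen to reproduce with probability proportional to its fitness (relative to the total fitness of the population); its offspring (of the same type) replaces the occupant of a neighbor chosen uniformly at random among the parent's neighbors. The fixation probability of $A$ is the probability that the process is absorbed in the all-$A$ state. *)

(* Defs.v *)
From HB Require Import structures.
From mathcomp Require Import all_boot all_order all_algebra.
From mathcomp Require Import all_classical all_reals all_analysis.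
Set Implicit Arguments. Unset Strict Implicit. Unset Printing Implicit Defensive.
Import Order.TTheory GRing.Theory Num.Theory numFieldNormedType.Exports.
Local Open Scope ring_scope.

(* Vertices: V : finType; adjacency e : rel V.
   color x = true means x is green, false means red.
   A state of the process is the set S : {set V} of vertices occupied by A
   (mutants); all other vertices are occupied by B (residents). *)

Section ColoredMoran.
Variables (R : realType) (V : finType) (e : rel V) (color : V -> bool).
Variables (aG aR bG bR : R).

Definition deg (x : V) : nat := #|[set y | e x y]|.

Definition fitness (S : {set V}) (x : V) : R :=
  if x \in S then (if color x then aG else aR)
  else (if color x then bG else bR).

Definition total_fitness (S : {set V}) : R := \sum_(x : V) fitness S x.

Definition offspring_state (S : {set V}) (x y : V) : {set V} :=
  if x \in S then y |: S else S :\ y.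

Definition moran_step (S T : {set V}) : R :=
  \sum_(x : V) \sum_(y : V | e x y)
     (fitness S x / total_fitness S) * (deg x)%:R^-1
     * (offspring_state S x y == T)%:R.

Fixpoint moran_nstep (n : nat) (S T : {set V}) : R :=
  match n with
  | 0 => (S == T)%:R
  | n'.+1 => \sum_(U : {set V}) moran_step S U * moran_nstep n' U T
  end.

Definition fixA (S : {set V}) : R := limn (fun n => moran_nstep n S [set: V]).
Definition fixB (S : {set V}) : R := limn (fun n => moran_nstep n S (finset.set0 : {set V})).

Definition rhoA : R := (#|V|%:R)^-1 * \sum_(v : V) fixA [set v].
Definition rhoB : R := (#|V|%:R)^-1 * \sum_(v : V) fixB (~: [set v]).
End ColoredMoran.

(* Main.v *)
Require Import Defs.
From HB Require Import structures.
From mathcomp Require Import all_boot all_order all_algebra.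
From mathcomp Require Import all_classical all_reals all_analysis.
From mathcomp Require Import ring lra.
Import Order.TTheory GRing.Theory Num.Theory numFieldNormedType.Exports.
Local Open Scope ring_scope.

Lemma geo_bound_cvg (R : realType) (u : nat -> R) (L K c : R) (N : nat) :
  0 <= c -> c < 1 -> (0 < N)%N ->
  (forall n, `|u n - L| <= K * c ^+ (n %/ N)) -> (u n @[n --> \oo] --> L)%classic.
Proof.
move=> c0 c1 N0 Hb.
apply/cvgrPdist_le => eps eps0.
have Kp : 0 < `|K| + 1 by rewrite ltr_pwDr // normr_ge0.
have ce : `|c| < 1 by rewrite ger0_norm.
have /cvgrPdist_le /(_ (eps / (`|K| + 1))) := cvg_expr ce.
move=> /(_ (divr_gt0 eps0 Kp)) [k _ Hk].
exists (k * N)%N => // n /= hn.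
have hm : (k <= n %/ N)%N by rewrite -(mulnK k N0) leq_div2r.
have := Hk _ hm; rewrite /= sub0r normrN ger0_norm ?exprn_ge0 // => hx.
set x := c ^+ (n %/ N) in hx Hb *.
have x0 : 0 <= x by rewrite exprn_ge0.
rewrite distrC; apply: (le_trans (Hb n)).
have h1 : K * x <= `|K| * x by rewrite ler_wpM2r // ler_norm.
have h2 : `|K| * x <= (`|K| + 1) * x by rewrite ler_wpM2r // lerDl.
have h3 : (`|K| + 1) * x <= (`|K| + 1) * (eps / (`|K| + 1)) by rewrite ler_wpM2l // ltW.
have h4 : (`|K| + 1) * (eps / (`|K| + 1)) = eps by rewrite mulrC divfK // gt_eqF.
by rewrite -h4; apply: (le_trans h1); apply: (le_trans h2).
Qed.

Section Moran.
Variables (R : realType) (V : finType) (e : rel V) (color : V -> bool).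
Variables (aG aR bG bR : R).
Hypotheses (e_sym : symmetric e) (e_conn : forall x y : V, connect e x y)
  (N_ge2 : (2 <= #|V|)%N)
  (aG0 : 0 < aG) (aR0 : 0 < aR) (bG0 : 0 < bG) (bR0 : 0 < bR).

Local Notation fit := (fitness color aG aR bG bR).
Local Notation tot := (total_fitness color aG aR bG bR).
Local Notation step := (moran_step e color aG aR bG bR).
Local Notation sT := [set: V].
Local Notation s0 := (finset.set0 : {set V}).
Local Notation P := (moran_nstep e color aG aR bG bR).

Lemma fit_gt0 S x : 0 < fit S x.
Proof. by rewrite /fitness; case: ifP; case: ifP. Qed.

Lemma nbr x : exists y, e x y.
Proof.
have /card_gt0P [v] : (0 < #|predC1 x|)%N by rewrite cardC1; move: N_ge2; case: #|V| => [|[|]].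
rewrite !inE => vx.
have /connectP [[|y p] /= pth vl] := e_conn x v; first by rewrite vl eqxx in vx.
by exists y; case/andP: pth.
Qed.

Lemma deg_gt0 x : (0 < deg e x)%N.
Proof. by case: (nbr x) => y exy; rewrite /deg card_gt0; apply/set0Pn; exists y; rewrite inE. Qed.

Lemma tot_gt0 S : 0 < tot S.
Proof.
have /card_gt0P [x _] : (0 < #|V|)%N by exact: ltnW N_ge2.
rewrite /total_fitness (bigD1 x) //=.
have := fit_gt0 S x; have : 0 <= \sum_(i | i != x) fit S i by apply: sumr_ge0 => i _; exact/ltW/fit_gt0.
lra.
Qed.

Definition w S x : R := fit S x / tot S * (deg e x)%:R^-1.

Lemma w_ge0 S x : 0 <= w S x.
Proof. by rewrite /w mulr_ge0 ?invr_ge0 ?ler0n // divr_ge0 // ltW ?fit_gt0 ?tot_gt0. Qed.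

Lemma step_exp S (g : {set V} -> R) :
  \sum_T step S T * g T = \sum_x \sum_(y | e x y) w S x * g (offspring_state S x y).
Proof.
rewrite /moran_step.
under eq_bigr => T _ do rewrite big_distrl /=.
rewrite exchange_big /=; apply: eq_bigr => x _.
under eq_bigr => T _ do rewrite big_distrl /=.
rewrite exchange_big /=; apply: eq_bigr => y _.
rewrite (bigD1 (offspring_state S x y)) //= eqxx mulr1 big1 ?addr0 // => T.
by rewrite eq_sym => /negbTE ->; rewrite mulr0 mul0r.
Qed.

Lemma wsum S : \sum_x \sum_(y | e x y) w S x = 1.
Proof.
transitivity (\sum_x fit S x / tot S).
  apply: eq_bigr => x _.
  rewrite (eq_bigl (fun y => y \in [set y | e x y])) => [|y]; last by rewrite inE.
  rewrite sumr_const -mulr_natr /w -/(deg e x) -mulrA mulVf ?mulr1 //.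
  by rewrite pnatr_eq0 -lt0n deg_gt0.
by rewrite -mulr_suml divff // gt_eqF // tot_gt0.
Qed.

Lemma step_sum S : \sum_T step S T = 1.
Proof.
rewrite -(wsum S); under eq_bigr => T _ do rewrite -[step S T]mulr1.
by rewrite (step_exp S (fun _ => 1)); under eq_bigr do under eq_bigr do rewrite mulr1.
Qed.

Lemma step_ge0 S T : 0 <= step S T.
Proof.
rewrite /moran_step; apply: sumr_ge0 => x _; apply: sumr_ge0 => y _.
by apply: mulr_ge0; [exact: (w_ge0 S x) | rewrite ler0n].
Qed.

Lemma P_ge0 n S T : 0 <= P n S T.
Proof.
elim: n S => [|n IH] S /=; first by rewrite ler0n.
by apply: sumr_ge0 => U _; rewrite mulr_ge0 ?step_ge0.
Qed.

Lemma P_harm (g : {set V} -> R) :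
  (forall S, \sum_T step S T * g T = g S) ->
  forall n S, \sum_T P n S T * g T = g S.
Proof.
move=> Hg; elim=> [|n IH] S /=.
  rewrite (bigD1 S) //= eqxx mul1r big1 ?addr0 // => T.
  by rewrite eq_sym => /negbTE ->; rewrite mul0r.
under eq_bigr => T _ do rewrite big_distrl /=.
rewrite exchange_big /= -(Hg S); apply: eq_bigr => U _.
by under eq_bigr do rewrite -mulrA; rewrite -mulr_sumr IH.
Qed.

Lemma P_sum n S : \sum_T P n S T = 1.
Proof.
have := P_harm (fun _ => 1) _ n S; rewrite /=.
under eq_bigr do rewrite mulr1; apply => S'.
by under eq_bigr do rewrite mulr1; rewrite step_sum.
Qed.

Lemma P_CK n m S T : P (n + m) S T = \sum_U P n S U * P m U T.
Proof.
elim: n S => [|n IH] S /=.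
  rewrite add0n (bigD1 S) //= eqxx mul1r big1 ?addr0 // => U.
  by rewrite eq_sym => /negbTE ->; rewrite mul0r.
under eq_bigr => U _ do rewrite IH big_distrr /=.
rewrite exchange_big /=; apply: eq_bigr => W _.
by rewrite big_distrl /=; apply: eq_bigr => U _; rewrite mulrA.
Qed.


Lemma setU1_in (S : {set V}) y : y \in S -> y |: S = S.
Proof. by move=> yS; apply/setP => z; rewrite !inE; case: eqP => // ->. Qed.
Lemma setD1_out (S : {set V}) y : y \notin S -> S :\ y = S.
Proof. by move=> yS; apply/setP => z; rewrite !inE; case: eqP => // ->; rewrite (negbTE yS). Qed.

Lemma step_setT T : step sT T = (T == sT)%:R.
Proof.
rewrite /moran_step.
under eq_bigr => x _ do under eq_bigr => y _ do
  rewrite /offspring_state finset.in_setT (@setU1_in _ y (finset.in_setT y)).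
under eq_bigr => x _ do rewrite -mulr_suml.
by rewrite -mulr_suml; have := wsum sT; rewrite /w => ->; rewrite mul1r eq_sym.
Qed.

Lemma step_set0 T : step s0 T = (T == s0)%:R.
Proof.
rewrite /moran_step.
under eq_bigr => x _ do under eq_bigr => y _ do
  rewrite /offspring_state finset.in_set0 (@setD1_out _ y (negbT (finset.in_set0 y))).
under eq_bigr => x _ do rewrite -mulr_suml.
by rewrite -mulr_suml; have := wsum s0; rewrite /w => ->; rewrite mul1r eq_sym.
Qed.

Lemma P_abs (A : {set V}) : (forall T, step A T = (T == A)%:R) ->
  forall n T, P n A T = (T == A)%:R.
Proof.
move=> HA; elim=> [|n IH] T /=; first by rewrite eq_sym.
rewrite (bigD1 A) //= HA eqxx mul1r big1 ?addr0 // => U /negbTE UA.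
by rewrite HA UA mul0r.
Qed.

Lemma P_setT n T : P n sT T = (T == sT)%:R.
Proof. exact: P_abs step_setT n T. Qed.
Lemma P_set0 n T : P n s0 T = (T == s0)%:R.
Proof. exact: P_abs step_set0 n T. Qed.

Lemma set0_setT : (s0 : {set V}) != sT.
Proof.
have /card_gt0P [x _] : (0 < #|V|)%N by exact: ltnW N_ge2.
by apply/eqP => h; have := finset.in_setT x; rewrite -h inE.
Qed.

Definition q n S := \sum_(T | (T != s0) && (T != sT)) P n S T.

Lemma q_split n S : P n S s0 + P n S sT + q n S = 1.
Proof.
rewrite -(P_sum n S) (bigD1 s0) //= (bigD1 sT) /=; last by rewrite eq_sym set0_setT.
by rewrite addrA.
Qed.

Lemma q_ge0 n S : 0 <= q n S.
Proof. by apply: sumr_ge0 => T _; exact: P_ge0. Qed.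

Lemma q_le1 n S : q n S <= 1.
Proof. have := q_split n S; have := P_ge0 n S s0; have := P_ge0 n S sT; lra. Qed.

Lemma q_set0 n : q n s0 = 0.
Proof. by apply: big1 => T /andP [/negbTE h _]; rewrite P_set0 h. Qed.
Lemma q_setT n : q n sT = 0.
Proof. by apply: big1 => T /andP [_ /negbTE h]; rewrite P_setT h. Qed.

Lemma q_mul n m S c : (forall U, q m U <= c) -> q (n + m) S <= q n S * c.
Proof.
move=> Hc.
have -> : q (n + m) S = \sum_U P n S U * q m U.
  rewrite /q; under eq_bigr do rewrite P_CK.
  rewrite exchange_big /=; apply: eq_bigr => U _; by rewrite mulr_sumr.
rewrite (bigD1 s0) //= q_set0 mulr0 add0r (bigD1 sT) /=; last by rewrite eq_sym set0_setT.
rewrite q_setT mulr0 add0r [q n S]/q mulr_suml; apply: ler_sum => U _.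
by rewrite ler_wpM2l ?P_ge0.
Qed.

Lemma cross S : S != s0 -> S != sT -> exists x y, [/\ x \in S, y \notin S & e x y].
Proof.
move=> S0 ST.
case: (boolP [exists x, [exists y, [&& x \in S, y \notin S & e x y]]]).
  by case/existsP => x /existsP [y /and3P [? ? ?]]; exists x, y.
rewrite negb_exists => /forallP H.
have cl : fingraph.closed e (fun z => z \in S).
  move=> x y exy; case Sx: (x \in S); case Sy: (y \in S) => //.
    by have := H x; rewrite negb_exists => /forallP /(_ y); rewrite Sx Sy exy.
  by have := H y; rewrite negb_exists => /forallP /(_ x); rewrite Sx Sy e_sym exy.
case/set0Pn: S0 => x0 Sx0.
have [y0 Sy0] : exists y, y \notin S.
  case: (boolP [exists y, y \notin S]); first by case/existsP => y; exists y.
  rewrite negb_exists => /forallP H2; case/negP: ST; apply/eqP/setP => z.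
  by have := H2 z; rewrite negbK inE.
by have := closed_connect cl (e_conn x0 y0); rewrite /= Sx0 (negbTE Sy0).
Qed.

Lemma w_gt0 S x : 0 < w S x.
Proof. by rewrite /w mulr_gt0 ?invr_gt0 ?ltr0n ?deg_gt0 // divr_gt0 ?fit_gt0 ?tot_gt0. Qed.

Lemma step_lb S x y : e x y -> w S x <= step S (offspring_state S x y).
Proof.
move=> exy; rewrite /moran_step (bigD1 x) //= (bigD1 y) //= eqxx mulr1 -addrA.
rewrite lerDl; apply: addr_ge0; apply: sumr_ge0 => *; [|apply: sumr_ge0 => *];
  by rewrite mulr_ge0 ?ler0n // w_ge0.
Qed.

Lemma reach j S : S != s0 -> (#|~: S| <= j)%N -> 0 < P j S sT.
Proof.
move: S; elim: j => [|j IH] S S0 hc.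
  move: hc; rewrite leqn0 cards_eq0 => /eqP h.
  have -> : S = sT by rewrite -[S]finset.setCK h finset.setC0.
  by rewrite /= eqxx ltr01.
case: (eqVneq S sT) => [->|ST]; first by rewrite P_setT eqxx ltr01.
have [x [y [Sx Sy exy]]] := @cross S S0 ST.
set U := offspring_state S x y.
have hU : U = y |: S by rewrite /U /offspring_state Sx.
have U0 : U != s0 by rewrite hU; apply/set0Pn; exists y; rewrite !inE eqxx.
have hcU : (#|~: U| <= j)%N.
  have : ~: U = (~: S) :\ y by rewrite hU; apply/setP => z; rewrite !inE negb_or andbC.
  move=> ->; move: hc; rewrite (cardsD1 y (~: S)) inE Sy /=; by [].
rewrite /= (bigD1 U) //=.
have h1 := IH U U0 hcU.
have h2 : 0 < step S U by apply: lt_le_trans (@step_lb S x y exy); exact: w_gt0.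
have h3 : 0 <= \sum_(i | i != U) step S i * P j i sT
  by apply: sumr_ge0 => *; rewrite mulr_ge0 ?step_ge0 ?P_ge0.
have := mulr_gt0 h2 h1; lra.
Qed.

Definition Nv := #|V|.
Definition cmax := \big[Num.max/0]_(S : {set V}) q Nv S.

Lemma qN_lt1 S : q Nv S < 1.
Proof.
case: (eqVneq S s0) => [->|S0]; first by rewrite q_set0 ltr01.
have := @reach Nv S S0 (max_card _); have := q_split Nv S; have := P_ge0 Nv S s0; lra.
Qed.

Lemma cmax_lt1 : cmax < 1.
Proof. by apply: bigmax_lt => // S _; exact: qN_lt1. Qed.
Lemma cmax_ge0 : 0 <= cmax.
Proof. by apply: le_trans (le_bigmax _ _ s0); rewrite q_set0. Qed.
Lemma qN_le S : q Nv S <= cmax.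
Proof. exact: le_bigmax. Qed.

Lemma q_geo k S : q (k * Nv) S <= cmax ^+ k.
Proof.
elim: k S => [|k IH] S; first by rewrite mul0n expr0 q_le1.
rewrite mulSnr exprSr; apply: le_trans (@q_mul (k * Nv) Nv S cmax qN_le) _.
by rewrite ler_wpM2r // cmax_ge0.
Qed.

Lemma q_bound n S : q n S <= cmax ^+ (n %/ Nv).
Proof.
rewrite {1}(divn_eq n Nv); apply: le_trans (@q_mul (n %/ Nv * Nv) (n %% Nv) S 1 (q_le1 _)) _.
by rewrite mulr1 q_geo.
Qed.


Variables (kG kR : nat).
Hypotheses (proper : forall x y : V, e x y -> color x != color y)
  (degG : forall x : V, color x -> deg e x = kG)
  (degR : forall x : V, ~~ color x -> deg e x = kR)
  (kG0 : (0 < kG)%N) (kR0 : (0 < kR)%N).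

Definition zG := bR * (aR * kG%:R + bG * kR%:R) / (aR * (aG * kR%:R + bR * kG%:R)).
Definition zR := bG * (aG * kR%:R + bR * kG%:R) / (aG * (aR * kG%:R + bG * kR%:R)).
Definition Z (c : bool) := if c then zG else zR.
Definition f (S : {set V}) := \prod_(v in S) Z (color v).

Lemma kGr : kG%:R != 0 :> R. Proof. by rewrite pnatr_eq0 -lt0n. Qed.
Lemma kRr : kR%:R != 0 :> R. Proof. by rewrite pnatr_eq0 -lt0n. Qed.
Lemma kGp : 0 < kG%:R :> R. Proof. by rewrite ltr0n. Qed.
Lemma kRp : 0 < kR%:R :> R. Proof. by rewrite ltr0n. Qed.

Lemma degc x : (deg e x)%:R = (if color x then kG%:R else kR%:R) :> R.
Proof. by case: (boolP (color x)) => c; [rewrite degG | rewrite degR]. Qed.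

Lemma edge_case (S : {set V}) x y : x \in S -> y \notin S -> e x y ->
  w S x * (f (offspring_state S x y) - f S) + w S y * (f (offspring_state S y x) - f S) = 0.
Proof.
move=> Sx Sy exy.
have cy : color y = ~~ color x by move: (@proper x y exy); case: (color x); case: (color y).
rewrite /offspring_state Sx (negbTE Sy) /f big_setU1 //= (big_setD1 x Sx) /=.
set Q := \prod_(i in S :\ x) _.
rewrite /w /fitness Sx (negbTE Sy) !degc cy.
have t0 := tot_gt0 S; set t := tot S in t0 *.
have := kGp; have := kRp.
case: (color x) => /= k1 k2; rewrite /zG /zR; field;
  rewrite ?gt_eqF // ?mulr_gt0 // ?addr_gt0 // ?mulr_gt0 //.
Qed.

Definition h S x y := if e x y then w S x * (f (offspring_state S x y) - f S) else 0.

Lemma h_anti S x y : h S x y + h S y x = 0.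
Proof.
rewrite /h (e_sym y x); case: ifP => [exy|_]; last by rewrite addr0.
case Sx: (x \in S); case Sy: (y \in S).
- by rewrite /offspring_state Sx Sy !setU1_in // !subrr !mulr0 addr0.
- by apply: edge_case => //; rewrite Sy.
- by rewrite addrC; apply: edge_case => //; rewrite ?Sx // e_sym.
- by rewrite /offspring_state Sx Sy !setD1_out ?Sx ?Sy // !subrr !mulr0 addr0.
Qed.

Lemma harmonic S : \sum_T step S T * f T = f S.
Proof.
rewrite step_exp; apply/eqP; rewrite -subr_eq0.
have E : \sum_x \sum_(y | e x y) w S x * f S = f S.
  by under eq_bigr do rewrite -mulr_suml; rewrite -mulr_suml wsum mul1r.
rewrite -E.
have -> : \sum_x \sum_(y | e x y) w S x * f (offspring_state S x y) -
   \sum_x \sum_(y | e x y) w S x * f S = \sum_x \sum_y h S x y.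
  rewrite -sumrB; apply: eq_bigr => x _; rewrite -sumrB big_mkcond /=.
  by apply: eq_bigr => y _; rewrite /h; case: ifP => _; rewrite ?mulrBr ?subrr.
set s := \sum_x _.
have : s = - s.
  rewrite {1}/s exchange_big /= /s -sumrN; apply: eq_bigr => y _.
  rewrite -sumrN; apply: eq_bigr => x _; have := h_anti S x y; lra.
by move=> hs; apply/eqP; lra.
Qed.

Lemma f_set0 : f s0 = 1.
Proof. by rewrite /f big_set0. Qed.

Definition Fv := f sT.
Definition Mb := \sum_T `|f T - 1|.

Lemma key n S : P n S sT * (Fv - 1) =
  (f S - 1) - \sum_(T | (T != s0) && (T != sT)) P n S T * (f T - 1).
Proof.
have H : \sum_T P n S T * (f T - 1) = f S - 1.
  under eq_bigr do rewrite mulrBr mulr1.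
  by rewrite sumrB P_sum (@P_harm f harmonic).
rewrite -H (bigD1 s0) //= f_set0 subrr mulr0 add0r (bigD1 sT) /=; last by rewrite eq_sym set0_setT.
by rewrite addrK.
Qed.

Lemma err_bound n S :
  `|\sum_(T | (T != s0) && (T != sT)) P n S T * (f T - 1)| <= Mb * q n S.
Proof.
apply: le_trans (ler_norm_sum _ _ _) _.
rewrite /q mulr_sumr; apply: ler_sum => T _.
rewrite normrM (ger0_norm (P_ge0 _ _ _)) mulrC ler_wpM2r ?P_ge0 //.
rewrite /Mb (bigD1 T) //= lerDl; apply: sumr_ge0 => *; exact: normr_ge0.
Qed.

Lemma Nv_gt0 : (0 < Nv)%N.
Proof. exact: ltnW N_ge2. Qed.

Lemma Fv_neq1_gen : Fv = 1 -> forall S, f S = 1.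
Proof.
move=> F1 S.
have Hb : forall n, `|(fun _ : nat => f S - 1) n - 0| <= Mb * cmax ^+ (n %/ Nv).
  move=> n /=; rewrite subr0.
  have := key n S; rewrite F1 subrr mulr0 => /eqP; rewrite eq_sym subr_eq0 => /eqP ->.
  apply: le_trans (err_bound n S) _; rewrite ler_wpM2l ?q_bound //.
  by apply: sumr_ge0 => *; exact: normr_ge0.
have := @geo_bound_cvg R _ 0 _ _ _ cmax_ge0 cmax_lt1 Nv_gt0 Hb.
move=> H; have := cvg_lim _ H; rewrite lim_cst // => h0.
by apply/eqP; rewrite -subr_eq0 h0.
Qed.


Hypothesis neutral_neq : aG * aR != bG * bR.

Lemma colors : exists g r, color g /\ ~~ color r.
Proof.
have /card_gt0P [x _] : (0 < #|V|)%N by exact: ltnW N_ge2.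
case: (nbr x) => y exy; have := @proper x y exy.
by case cx: (color x); case cy: (color y) => // _; [exists x, y | exists y, x]; rewrite cx cy.
Qed.

Lemma zG_gt0 : 0 < zG.
Proof. by rewrite /zG divr_gt0 ?mulr_gt0 ?addr_gt0 ?mulr_gt0 ?kGp ?kRp. Qed.
Lemma zR_gt0 : 0 < zR.
Proof. by rewrite /zR divr_gt0 ?mulr_gt0 ?addr_gt0 ?mulr_gt0 ?kGp ?kRp. Qed.
Lemma Z_neq0 c : Z c != 0.
Proof. by case: c; rewrite /Z gt_eqF ?zG_gt0 ?zR_gt0. Qed.

Lemma Fv_neq1 : Fv != 1.
Proof.
apply/eqP => F1; have [g [r [cg cr]]] := colors.
have := Fv_neq1_gen F1 [set g]; rewrite /f big_set1 /Z cg /zG => zG1.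
have den0 : aR * (aG * kR%:R + bR * kG%:R) != 0
  by rewrite gt_eqF ?mulr_gt0 ?addr_gt0 ?mulr_gt0 ?kGp ?kRp.
have E : bR * (aR * kG%:R + bG * kR%:R) = aR * (aG * kR%:R + bR * kG%:R).
  by move: zG1 => /(congr1 (fun t => t * (aR * (aG * kR%:R + bR * kG%:R)))); rewrite divfK // mul1r.
case/negP: neutral_neq; rewrite -subr_eq0.
have : (aG * aR - bG * bR) * kR%:R = 0.
  have -> : (aG * aR - bG * bR) * kR%:R =
    aR * (aG * kR%:R + bR * kG%:R) - bR * (aR * kG%:R + bG * kR%:R) by ring.
  by rewrite E subrr.
by move/eqP; rewrite mulf_eq0 (negbTE kRr) orbF.
Qed.

Definition Lv S := (f S - 1) / (Fv - 1).
Definition Kc := Mb / `|Fv - 1|.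

Lemma boundT n S : `|P n S sT - Lv S| <= Kc * cmax ^+ (n %/ Nv).
Proof.
have D : Fv - 1 != 0 by rewrite subr_eq0 Fv_neq1.
set s := \sum_(T | (T != s0) && (T != sT)) P n S T * (f T - 1).
have hs : s = (f S - 1) - P n S sT * (Fv - 1) by rewrite key /s; ring.
have -> : P n S sT - Lv S = - s / (Fv - 1) by rewrite hs /Lv; field.
rewrite normrM normrN normfV /Kc mulrAC ler_wpM2r ?invr_ge0 ?normr_ge0 //.
apply: le_trans (err_bound n S) _; rewrite ler_wpM2l ?q_bound //.
by apply: sumr_ge0 => *; exact: normr_ge0.
Qed.

Lemma limT S : ((fun n => P n S sT) n @[n --> \oo] --> Lv S)%classic.
Proof. exact: (@geo_bound_cvg R (fun n => P n S sT) _ _ _ _ cmax_ge0 cmax_lt1 Nv_gt0 (boundT ^~ S)). Qed.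

Lemma bound0 n S : `|P n S s0 - (1 - Lv S)| <= (Kc + 1) * cmax ^+ (n %/ Nv).
Proof.
have hq := q_split n S.
have -> : P n S s0 - (1 - Lv S) = - (P n S sT - Lv S) - q n S by lra.
apply: le_trans (ler_normB _ _) _; rewrite normrN (ger0_norm (q_ge0 _ _)) mulrDl mul1r.
by apply: lerD; [exact: boundT | exact: q_bound].
Qed.

Lemma lim0 S : ((fun n => P n S s0) n @[n --> \oo] --> 1 - Lv S)%classic.
Proof. exact: (@geo_bound_cvg R (fun n => P n S s0) _ _ _ _ cmax_ge0 cmax_lt1 Nv_gt0 (bound0 ^~ S)). Qed.

Lemma sum_col (g : bool -> R) :
  \sum_v g (color v) = #|[set x | color x]|%:R * g true + #|[set x | ~~ color x]|%:R * g false.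
Proof.
rewrite (bigID color) /=; congr (_ + _).
  rewrite (eq_bigl (fun i => i \in [set x | color x])) => [|i]; last by rewrite !inE.
  by rewrite (eq_bigr (fun _ => g true)) ?sumr_const ?mulr_natl // => i; rewrite inE => ->.
rewrite (eq_bigl (fun i => i \in [set x | ~~ color x])) => [|i]; last by rewrite !inE.
by rewrite (eq_bigr (fun _ => g false)) ?sumr_const ?mulr_natl // => i; rewrite inE => /negbTE ->.
Qed.

Lemma F_eq : Fv = zG ^+ #|[set x | color x]| * zR ^+ #|[set x | ~~ color x]|.
Proof.
rewrite /Fv /f (bigID color) /=; congr (_ * _).
  rewrite (eq_bigl (fun i => i \in [set x | color x])) => [|i]; last by rewrite !inE.
  by rewrite (eq_bigr (fun _ => zG)) ?prodr_const // => i; rewrite inE /Z => ->.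
rewrite (eq_bigl (fun i => i \in [set x | ~~ color x])) => [|i]; last by rewrite !inE.
by rewrite (eq_bigr (fun _ => zR)) ?prodr_const // => i; rewrite inE /Z => /negbTE ->.
Qed.

Lemma avg (g : bool -> R) G :
  #|V|%:R^-1 * \sum_v ((1 - g (color v)) / (1 - G)) =
  (1 - #|V|%:R^-1 * (#|[set x | color x]|%:R * g true + #|[set x | ~~ color x]|%:R * g false)) / (1 - G).
Proof.
have N0 : #|V|%:R != 0 :> R by rewrite pnatr_eq0 -lt0n; exact: ltnW N_ge2.
rewrite -mulr_suml sumrB sum_col sumr_const.
rewrite -sum_col; have -> : (1 *+ #|V| : R) = #|V|%:R by [].
by rewrite mulrA mulrBr mulVf.
Qed.

Lemma f_set1 v : f [set v] = Z (color v).
Proof. by rewrite /f big_set1. Qed.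

Lemma f_compl v : f (~: [set v]) * Z (color v) = Fv.
Proof.
rewrite /Fv /f [in RHS](bigD1 v) //= mulrC; congr (_ * _).
by apply: eq_bigl => i; rewrite !inE.
Qed.


Lemma hG_eq : aR * (bR * kG%:R + aG * kR%:R) / (bR * (bG * kR%:R + aR * kG%:R)) = zG^-1.
Proof.
have := kGp; have := kRp => k1 k2.
rewrite /zG; field; rewrite ?gt_eqF // ?mulr_gt0 // ?addr_gt0 // ?mulr_gt0 //.
Qed.
Lemma hR_eq : aG * (bG * kR%:R + aR * kG%:R) / (bG * (bR * kG%:R + aG * kR%:R)) = zR^-1.
Proof.
have := kGp; have := kRp => k1 k2.
rewrite /zR; field; rewrite ?gt_eqF // ?mulr_gt0 // ?addr_gt0 // ?mulr_gt0 //.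
Qed.

Lemma final :
  let NG := #|[set x | color x]| in
  let NR := #|[set x | ~~ color x]| in
  (forall v : V, cvgn (fun n => P n [set v] sT))
  /\ (forall v : V, cvgn (fun n => P n (~: [set v]) s0))
  /\ rhoA e color aG aR bG bR
       = (1 - #|V|%:R^-1 * (NG%:R * zG + NR%:R * zR)) / (1 - zG ^+ NG * zR ^+ NR)
  /\ rhoB e color aG aR bG bR
       = (1 - #|V|%:R^-1 * (NG%:R * (aR * (bR * kG%:R + aG * kR%:R) / (bR * (bG * kR%:R + aR * kG%:R)))
            + NR%:R * (aG * (bG * kR%:R + aR * kG%:R) / (bG * (bR * kG%:R + aG * kR%:R)))))
         / (1 - (aR * (bR * kG%:R + aG * kR%:R) / (bR * (bG * kR%:R + aR * kG%:R))) ^+ NG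
               * (aG * (bG * kR%:R + aR * kG%:R) / (bG * (bR * kG%:R + aG * kR%:R))) ^+ NR).
Proof.
move=> NG NR.
split; first by move=> v; apply: cvgP (limT _).
split; first by move=> v; apply: cvgP (lim0 _).
have D : Fv - 1 != 0 by rewrite subr_eq0 Fv_neq1.
have F0 : Fv != 0 by rewrite F_eq mulf_neq0 // expf_neq0 // ?Z_neq0 //; [exact: (Z_neq0 true) | exact: (Z_neq0 false)].
split.
  rewrite /rhoA /fixA.
  under eq_bigr => v _ do rewrite (cvg_lim _ (limT _)) // /Lv f_set1.
  rewrite -F_eq -(avg Z); congr (_ * _); apply: eq_bigr => v _.
  by rewrite -(opprB (Z _) 1) -(opprB Fv 1) invrN mulrNN.
rewrite /rhoB /fixB.
under eq_bigr => v _ do rewrite (cvg_lim _ (lim0 _)) //.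
rewrite hG_eq hR_eq !exprVn -invfM -F_eq.
rewrite -(avg (fun c => (Z c)^-1)); congr (_ * _); apply: eq_bigr => v _.
have Zv := Z_neq0 (color v).
have E := f_compl v.
rewrite /Lv.
have -> : f (~: [set v]) = Fv / Z (color v) by rewrite -E mulfK.
have D2 : 1 - Fv^-1 != 0 by rewrite subr_eq0 eq_sym invr_eq1 Fv_neq1.
move: Zv D D2 F0; generalize (Z (color v)) Fv => z F Zv D D2 F0.
by field; rewrite F0 D Zv.
Qed.

End Moran.

Theorem theorem1 (R : realType) (V : finType) (e : rel V) (color : V -> bool)
    (kG kR : nat) (aG aR bG bR : R)
    (e_sym : symmetric e) (e_irr : irreflexive e)
    (e_conn : forall x y : V, connect e x y)
    (N_ge2 : (2 <= #|V|)%N)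
    (proper : forall x y : V, e x y -> color x != color y)
    (degG : forall x : V, color x -> deg e x = kG)
    (degR : forall x : V, ~~ color x -> deg e x = kR)
    (aG_gt0 : 0 < aG) (aR_gt0 : 0 < aR) (bG_gt0 : 0 < bG) (bR_gt0 : 0 < bR)
    (neutral_neq : aG * aR != bG * bR) :
  let N := #|V| in
  let NG := #|[set x | color x]| in
  let NR := #|[set x | ~~ color x]| in
  let zG := bR * (aR * kG%:R + bG * kR%:R) / (aR * (aG * kR%:R + bR * kG%:R)) in
  let zR := bG * (aG * kR%:R + bR * kG%:R) / (aG * (aR * kG%:R + bG * kR%:R)) in
  let hG := aR * (bR * kG%:R + aG * kR%:R) / (bR * (bG * kR%:R + aR * kG%:R)) in
  let hR := aG * (bG * kR%:R + aR * kG%:R) / (bG * (bR * kG%:R + aG * kR%:R)) in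
  (forall v : V, cvgn (fun n => moran_nstep e color aG aR bG bR n [set v] [set: V]))
  /\ (forall v : V, cvgn (fun n => moran_nstep e color aG aR bG bR n (~: [set v]) (finset.set0 : {set V})))
  /\ rhoA e color aG aR bG bR
       = (1 - N%:R^-1 * (NG%:R * zG + NR%:R * zR)) / (1 - zG ^+ NG * zR ^+ NR)
  /\ rhoB e color aG aR bG bR
       = (1 - N%:R^-1 * (NG%:R * hG + NR%:R * hR)) / (1 - hG ^+ NG * hR ^+ NR).
Proof.
move=> N NG NR zG' zR' hG hR.
have [g [r [cg cr]]] := @colors V e color e_conn N_ge2 proper.
have kG0 : (0 < kG)%N by rewrite -(degG g cg); exact: (@deg_gt0 V e e_conn N_ge2).
have kR0 : (0 < kR)%N by rewrite -(degR r cr); exact: (@deg_gt0 V e e_conn N_ge2).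
exact: (@final R V e color aG aR bG bR e_sym e_conn N_ge2 aG_gt0 aR_gt0 bG_gt0 bR_gt0 kG kR proper degG degR kG0 kR0 neutral_neq).
Qed.
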